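(* With $p_n=\Psi(P_n)$, $m_n=\Psi(M_n)$, $o_n=\Psi(O_n)$ for $n\ge1$ and $p_0=m_0=o_0=1$, the following hold for all $n\ge 3$: (i) $p_n=5p_{n-1}-4p_{n-2}+4p_{n-3}$, with $p_0=1$, $p_1=5$, $p_2=25$; (ii) $m_n=6m_{n-1}-3m_{n-2}+2m_{n-3}$, with $m_0=1$, $m_1=5$, $m_2=25$; (iii) $o_n=4o_{n-1}+4o_{n-2}+o_{n-3}$, with $o_0=1$, $o_1=5$, $o_2=25$.
   Context: A matching of a graph is a set of pairwise vertex-disjoint edges; it is maximal if it is not a proper subset of another matching. $\Psi(G)$ is the number of maximal matchings of $G$. A chain hexagonal cactus is a connected graph all of whose blocks are 6-cycles (hexagons), in which each hexagon has at most two cut-vertices and each cut-vertex lies in exactly two hexagons; its length is its number of hexagons. An internal hexagon (one with two cut-vertices) is ortho, meta or para if its two cut-vertices are at distance 1, 2 or 3 in the hexagon. $P_n$, $M_n$, $O_n$ are the chain hexagonal cacti of length $n$ whose internal hexagons are all para, all meta, resp. all ortho. *)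

(* Defs.v *)
From HB Require Import structures.
From mathcomp Require Import all_boot all_order all_algebra.
Set Implicit Arguments. Unset Strict Implicit. Unset Printing Implicit Defensive.

(* A simple graph on a finite vertex type T is given by an adjacency relation
   e (assumed symmetric and irreflexive in the instances used below). *)
Definition edges (T : finType) (e : rel T) : {set {set T}} :=
  [set A : {set T} | [exists x, exists y, [&& x != y, e x y & A == [set x; y]]]].

Definition is_matching (T : finType) (e : rel T) (M : {set {set T}}) : bool :=
  (M \subset edges e) && trivIset M.

Definition is_maximal_matching (T : finType) (e : rel T) (M : {set {set T}}) : bool :=
  is_matching e M &&
  [forall M' : {set {set T}}, is_matching e M' ==> ~~ (M \proper M')].

Definition Psi (T : finType) (e : rel T) : nat :=
  #|[set M : {set {set T}} | is_maximal_matching e M]|.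

(* Hexagon k (k < n) has vertex set
   {5k, 5k+1, ..., 5k+5}; consecutive hexagons k-1, k share the cut vertex 5k.
   [hexagon d k] lists hexagon k in cyclic order, the entry vertex 5k at
   position 0 and the exit vertex 5k+5 at position d, so the two (potential)
   cut vertices are at distance d in the hexagon:
   d = 1 ortho, d = 2 meta, d = 3 para. *)
Definition hexagon (d k : nat) : seq nat :=
  let b := (5 * k)%N in
  match d with
  | 1 => [:: b; b + 5; b + 1; b + 2; b + 3; b + 4]
  | 2 => [:: b; b + 1; b + 5; b + 2; b + 3; b + 4]
  | _ => [:: b; b + 1; b + 2; b + 5; b + 3; b + 4]
  end.

Definition cycle_adj (s : seq nat) (u v : nat) : bool :=
  (u \in s) && (v \in s) && ((next s u == v) || (next s v == u)).

Definition chain_adj (d n : nat) : rel 'I_((5 * n).+1) :=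
  fun u v => [exists k : 'I_n, cycle_adj (hexagon d k) u v].
Arguments chain_adj : clear implicits.

Definition P_adj (n : nat) := chain_adj 3 n.
Definition M_adj (n : nat) := chain_adj 2 n.
Definition O_adj (n : nat) := chain_adj 1 n.
Arguments P_adj : clear implicits.
Arguments M_adj : clear implicits.
Arguments O_adj : clear implicits.

Definition pseq (n : nat) : nat := if n is 0 then 1 else Psi (P_adj n).
Definition mseq (n : nat) : nat := if n is 0 then 1 else Psi (M_adj n).
Definition oseq (n : nat) : nat := if n is 0 then 1 else Psi (O_adj n).

(* Main.v *)
Require Import Defs.
From HB Require Import structures.
From mathcomp Require Import all_boot all_order all_algebra.
From mathcomp Require Import zify.
From Stdlib Require Import Btauto.
Set Implicit Arguments. Unset Strict Implicit. Unset Printing Implicit Defensive.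

Definition mem6 (w i : nat) : bool := odd (w %/ 2 ^ i).
Definition sc (i : nat) : nat := i.+1 %% 6.
Section Loc.
Variable dd : nat.
Definition tout (i : nat) := (i == dd) || (sc i == dd).
Definition tin0 (i : nat) := (i == 0) || (sc i == 0).
Definition samehex (i j : nat) := [|| i == j, i == sc j, sc i == j | sc i == sc j].
Definition intra (w : nat) := all (fun i => all (fun j =>
   mem6 w i ==> mem6 w j ==> (i != j) ==> ~~ samehex i j) (iota 0 6)) (iota 0 6).
Definition exc (w : nat) := has (fun i => mem6 w i && tout i) (iota 0 6).
Definition enc (w : nat) := has (fun i => mem6 w i && tin0 i) (iota 0 6).
Definition nbr (w i : nat) := has (fun j => [&& mem6 w j, j != i & samehex i j]) (iota 0 6).
Definition covin (c : bool) (w i : nat) := nbr w i || (tin0 i && c).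
Definition good (c : bool) (w : nat) :=
  intra w && all (fun i => [|| mem6 w i, tout i | covin c w i]) (iota 0 6).
Definition req (c : bool) (w : nat) :=
  has (fun i => [&& ~~ mem6 w i, tout i & ~~ covin c w i]) (iota 0 6).
Definition check (c r : bool) (w : nat) :=
  [&& good c w, r ==> enc w & ~~ (c && enc w)].
Fixpoint acc (c r : bool) (s : seq nat) : bool :=
  if s is w :: s' then check c r w && acc (exc w) (req c w) s' else ~~ r.

Definition lst n (f : {ffun 'I_n -> 'I_64}) : seq nat := [seq val (f i) | i <- enum 'I_n].
Definition cnt n c r := \sum_(f : {ffun 'I_n -> 'I_64}) acc c r (lst f).

Definition fcons n (w : 'I_64) (g : {ffun 'I_n -> 'I_64}) : {ffun 'I_n.+1 -> 'I_64} :=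
  [ffun i => if unlift ord0 i is Some j then g j else w].
Definition ftail n (f : {ffun 'I_n.+1 -> 'I_64}) : {ffun 'I_n -> 'I_64} :=
  [ffun j => f (lift ord0 j)].

Lemma lst_fcons n w (g : {ffun 'I_n -> 'I_64}) : lst (fcons w g) = val w :: lst g.
Proof.
rewrite /lst enum_ordSl /= ffunE unlift_none; congr (_ :: _).
rewrite -map_comp; apply: eq_map => j /=; by rewrite ffunE liftK.
Qed.

Lemma cnt0 c r : cnt 0 c r = ~~ r.
Proof.
rewrite /cnt (eq_bigr (fun _ => nat_of_bool (~~ r))); last first.
  by move=> f _; rewrite /lst enum_ord0.
by rewrite sum_nat_const card_ffun !card_ord expn0 mul1n.
Qed.

Lemma cnt_S n c r : cnt n.+1 c r =
  \sum_(w < 64) check c r w * cnt n (exc w) (req c w).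
Proof.
rewrite /cnt (reindex (fun p : 'I_64 * {ffun 'I_n -> 'I_64} => fcons p.1 p.2)) /=; last first.
  exists (fun f : {ffun 'I_n.+1 -> 'I_64} => (f ord0, ftail f)) => [[w g] _|f _] /=.
    congr (_, _); first by rewrite ffunE unlift_none.
    by apply/ffunP => j; rewrite !ffunE liftK.
  apply/ffunP => i; rewrite !ffunE; case: (unliftP ord0 i) => [j ->|->] //.
  by rewrite ffunE.
rewrite -(pair_bigA _ (fun w g => nat_of_bool (acc c r (lst (fcons w g))))) /=.
apply: eq_bigr => w _; rewrite big_distrr /=; apply: eq_bigr => g _.
by rewrite lst_fcons /=; case: (check c r w); rewrite ?mul1n ?mul0n.
Qed.

Definition coef c r c' r' :=
  \sum_(w < 64) [&& check c r w, exc w == c' & req c w == r'].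

Lemma cnt_S2 n c r : cnt n.+1 c r =
  coef c r false false * cnt n false false + coef c r false true * cnt n false true
  + coef c r true false * cnt n true false + coef c r true true * cnt n true true.
Proof.
rewrite cnt_S /coef !big_distrl -!big_split /=; apply: eq_bigr => w _.
by case: (check c r w); case: (exc w); case: (req c w); rewrite /= ?mul0n ?mul1n ?addn0 ?add0n.
Qed.
Lemma coef_nat c r c' r' : coef c r c' r' =
  \sum_(0 <= w < 64) [&& check c r w, exc w == c' & req c w == r'].
Proof. by rewrite /coef -(big_mkord (fun _ => true) (fun w => nat_of_bool [&& check c r w, exc w == c' & req c w == r'])). Qed.
End Loc.

Ltac compcoef := rewrite coef_nat unlock; vm_compute; reflexivity.

Lemma coefs1 : coef 1 false false false false = 1 /\ coef 1 false false false true = 2 /\ coef 1 false false true false = 4 /\ coef 1 false false true true = 0 /\ coef 1 false true false false = 1 /\ coef 1 false true false true = 1 /\ coef 1 false true true false = 3 /\ coef 1 false true true true = 0 /\ coef 1 true false false false = 1 /\ coef 1 true false false true = 1 /\ coef 1 true false true false = 2 /\ coef 1 true false true true = 0.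
Proof. repeat split; compcoef. Qed.
Lemma coefs2 : coef 2 false false false false = 1 /\ coef 2 false false false true = 2 /\ coef 2 false false true false = 4 /\ coef 2 false false true true = 0 /\ coef 2 false true false false = 1 /\ coef 2 false true false true = 2 /\ coef 2 false true true false = 3 /\ coef 2 false true true true = 0 /\ coef 2 true false false false = 0 /\ coef 2 true false false true = 2 /\ coef 2 true false true false = 3 /\ coef 2 true false true true = 0.
Proof. repeat split; compcoef. Qed.
Lemma coefs3 : coef 3 false false false false = 1 /\ coef 3 false false false true = 2 /\ coef 3 false false true false = 4 /\ coef 3 false false true true = 0 /\ coef 3 false true false false = 0 /\ coef 3 false true false true = 2 /\ coef 3 false true true false = 4 /\ coef 3 false true true true = 0 /\ coef 3 true false false false = 1 /\ coef 3 true false false true = 0 /\ coef 3 true false true false = 2 /\ coef 3 true false true true = 0.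
Proof. repeat split; compcoef. Qed.
Lemma rec3 n : cnt 3 n.+3 false false + 4 * cnt 3 n.+1 false false = 5 * cnt 3 n.+2 false false + 4 * cnt 3 n false false.
Proof.
case: coefs3 => [e0 [e1 [e2 [e3 [e4 [e5 [e6 [e7 [e8 [e9 [e10 e11]]]]]]]]]]].
rewrite !cnt_S2 !e0 !e1 !e2 !e3 !e4 !e5 !e6 !e7 !e8 !e9 !e10 !e11.
set x := cnt 3 n false false; set y := cnt 3 n false true; set z := cnt 3 n true false; set t := cnt 3 n true true.
lia.
Qed.
Lemma rec2 n : cnt 2 n.+3 false false + 3 * cnt 2 n.+1 false false = 6 * cnt 2 n.+2 false false + 2 * cnt 2 n false false.
Proof.
case: coefs2 => [e0 [e1 [e2 [e3 [e4 [e5 [e6 [e7 [e8 [e9 [e10 e11]]]]]]]]]]].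
rewrite !cnt_S2 !e0 !e1 !e2 !e3 !e4 !e5 !e6 !e7 !e8 !e9 !e10 !e11.
set x := cnt 2 n false false; set y := cnt 2 n false true; set z := cnt 2 n true false; set t := cnt 2 n true true.
lia.
Qed.
Lemma rec1 n : cnt 1 n.+3 false false = 4 * cnt 1 n.+2 false false + 4 * cnt 1 n.+1 false false + cnt 1 n false false.
Proof.
case: coefs1 => [e0 [e1 [e2 [e3 [e4 [e5 [e6 [e7 [e8 [e9 [e10 e11]]]]]]]]]]].
rewrite !cnt_S2 !e0 !e1 !e2 !e3 !e4 !e5 !e6 !e7 !e8 !e9 !e10 !e11.
set x := cnt 1 n false false; set y := cnt 1 n false true; set z := cnt 1 n true false; set t := cnt 1 n true true.
lia.
Qed.

Section Geo.
Variables (d : nat).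
Hypothesis hd : [|| d == 1, d == 2 | d == 3].

Definition off (j : nat) := nth 0 (hexagon d 0) j.

Lemma hexS k : hexagon d k = [seq 5 * k + x | x <- hexagon d 0].
Proof.
by case/or3P: hd => /eqP ->; rewrite /hexagon /= muln0 !add0n addn0.
Qed.

Lemma hex0_uniq : uniq (hexagon d 0).
Proof. by case/or3P: hd => /eqP ->. Qed.

Lemma off_le j : j < 6 -> off j <= 5.
Proof. by rewrite /off; case/or3P: hd => /eqP -> ; case: j => [|[|[|[|[|[|]]]]]]. Qed.

Lemma off_inj a b : a < 6 -> b < 6 -> (off a == off b) = (a == b).
Proof.
by rewrite /off; case/or3P: hd => /eqP ->; case: a => [|[|[|[|[|[|]]]]]]; case: b => [|[|[|[|[|[|]]]]]].
Qed.

Lemma off5 a : a < 6 -> (off a == 5) = (a == d).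
Proof. by rewrite /off; case/or3P: hd => /eqP ->; case: a => [|[|[|[|[|[|]]]]]]. Qed.

Lemma off0 a : a < 6 -> (off a == 0) = (a == 0).
Proof. by rewrite /off; case/or3P: hd => /eqP ->; case: a => [|[|[|[|[|[|]]]]]]. Qed.

Lemma sc_lt i : sc i < 6.
Proof. by rewrite /sc ltn_pmod. Qed.

Lemma cyc0 x y :
  [&& x \in hexagon d 0, y \in hexagon d 0 & (next (hexagon d 0) x == y) || (next (hexagon d 0) y == x)]
  = has (fun i => ((x == off i) && (y == off (sc i))) || ((y == off i) && (x == off (sc i)))) (iota 0 6).
Proof.
rewrite /off; case/or3P: hd => /eqP ->;
by case: x => [|[|[|[|[|[|x]]]]]]; case: y => [|[|[|[|[|[|y]]]]]].
Qed.


Lemma cycS b u v : cycle_adj [seq b + x | x <- hexagon d 0] u v =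
  has (fun i => ((u == b + off i) && (v == b + off (sc i))) || ((v == b + off i) && (u == b + off (sc i)))) (iota 0 6).
Proof.
rewrite /cycle_adj.
case: (leqP b u) => hu; last first.
  have -> : (u \in [seq b + x | x <- hexagon d 0]) = false.
    by apply/negbTE/mapP => -[x _ ?]; lia.
  rewrite !andFb; symmetry; apply/negbTE/hasPn => i _.
  by rewrite !(ltn_eqF (leq_trans hu (leq_addr _ _))) andbF.
case: (leqP b v) => hv; last first.
  have -> : (v \in [seq b + x | x <- hexagon d 0]) = false.
    by apply/negbTE/mapP => -[x _ ?]; lia.
  rewrite andbF andFb; symmetry; apply/negbTE/hasPn => i _.
  by rewrite !(ltn_eqF (leq_trans hv (leq_addr _ _))) andbF.
rewrite -(subnKC hu) -(subnKC hv) !(mem_map (@addnI b)) (next_map (@addnI b)) ?hex0_uniq //.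
rewrite (next_map (@addnI b)) ?hex0_uniq // !eqn_add2l -andbA cyc0.
by apply: eq_has => i /=; rewrite !eqn_add2l.
Qed.

Variable n : nat.
Definition vv (k j : nat) := 5 * k + off j.
Definition V (k j : nat) : 'I_(5 * n).+1 := inord (vv k j).

Lemma V_val k j : k < n -> j < 6 -> (V k j : nat) = vv k j.
Proof. move=> hk hj; rewrite /V inordK // /vv; have := off_le hj; lia. Qed.

Lemma adjE (u v : 'I_(5 * n).+1) : chain_adj d n u v =
  [exists k : 'I_n, has (fun i => ((u == V k i) && (v == V k (sc i))) || ((v == V k i) && (u == V k (sc i)))) (iota 0 6)].
Proof.
rewrite /chain_adj; apply: eq_existsb => k; rewrite hexS cycS.
apply: eq_in_has => i; rewrite mem_iota => /andP[_ hi].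
by rewrite -!(inj_eq val_inj) /= !V_val ?sc_lt.
Qed.

Definition share (k a k' b : nat) :=
  [|| (k == k') && (a == b), [&& k' == k.+1, a == d & b == 0] | [&& k == k'.+1, a == 0 & b == d]].

Lemma dlt : d < 6.
Proof. by case/or3P: hd => /eqP ->. Qed.

Lemma Veq k k' a b : k < n -> k' < n -> a < 6 -> b < 6 -> (V k a == V k' b) = share k a k' b.
Proof.
move=> hk hk' ha hb; rewrite -(inj_eq val_inj) /= !V_val // /vv.
have la := off_le ha; have lb := off_le hb.
have od : off d == 5 by rewrite off5 ?dlt.
have o0 : off 0 == 0 by [rewrite off0].
apply/eqP/idP => [H|].
  have : (k = k' /\ off a = off b) \/ (k' = k.+1 /\ off a = 5 /\ off b = 0) \/
         (k = k'.+1 /\ off a = 0 /\ off b = 5) by lia.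
  case=> [[-> /eqP]|[[-> [/eqP h1 /eqP h2]]|[-> [/eqP h1 /eqP h2]]]].
  - by move=> h; rewrite (off_inj ha hb) in h; rewrite /share (eqP h) !eqxx.
  - by rewrite (off5 ha) in h1; rewrite (off0 hb) in h2; rewrite /share (eqP h1) (eqP h2) !eqxx !orbT.
  - by rewrite (off0 ha) in h1; rewrite (off5 hb) in h2; rewrite /share (eqP h1) (eqP h2) !eqxx !orbT.
case/or3P => [/andP[/eqP-> /eqP->]|/and3P[/eqP-> /eqP-> /eqP->]|/and3P[/eqP-> /eqP-> /eqP->]] //; lia.
Qed.

Definition E (p : 'I_n * 'I_6) : {set 'I_(5 * n).+1} := [set V p.1 p.2; V p.1 (sc p.2)].

Lemma edgesE : edges (chain_adj d n) = [set E p | p : 'I_n * 'I_6].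
Proof.
apply/setP => A; rewrite inE; apply/existsP/imsetP.
  move=> [x /existsP[y /and3P[nxy exy /eqP ->]]].
  move: exy; rewrite adjE => /existsP[k /hasP[i]]; rewrite mem_iota => /andP[_ hi].
  case/orP => /andP[/eqP-> /eqP->]; exists (k, Ordinal hi) => //.
  by rewrite /E /= setUC.
move=> [[k i] _ ->]; exists (V k i); apply/existsP; exists (V k (sc i)).
rewrite eqxx andbT; apply/andP; split.
  rewrite Veq ?sc_lt //; apply/negP; rewrite /share /sc; have := ltn_ord i; lia.
rewrite adjE; apply/existsP; exists k; apply/hasP; exists (val i).
  by rewrite mem_iota /=.
by rewrite !eqxx.
Qed.

Lemma E_inj : injective E.
Proof.
move=> [k i] [k' i'] H.
have h1 : V k i \in E (k', i') by rewrite -H !inE eqxx.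
have h2 : V k (sc i) \in E (k', i') by rewrite -H !inE eqxx orbT.
move: h1 h2; rewrite !inE /= !Veq ?sc_lt // /share /sc => h1 h2.
have hi := ltn_ord i; have hi' := ltn_ord i'.
have hd' := dlt.
have [e1 e2] : (k : nat) = k' /\ (i : nat) = i' by lia.
by congr (_, _); apply: val_inj.
Qed.

Lemma disj2 (T : finType) (a b : T) (B : {set T}) :
  [disjoint [set a; b] & B] = (a \notin B) && (b \notin B).
Proof.
rewrite (@eq_disjoint _ _ (predU1 a (pred1 b))) => [|x]; last by rewrite !inE.
by rewrite disjointU1 disjoint1.
Qed.


Lemma touchE (p q : 'I_n * 'I_6) : ~~ [disjoint E p & E q] =
  [|| (p.1 == q.1 :> nat) && samehex p.2 q.2,
      [&& q.1 == p.1.+1 :> nat, tout d p.2 & tin0 q.2] |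
      [&& p.1 == q.1.+1 :> nat, tin0 p.2 & tout d q.2]].
Proof.
case: p q => [k i] [k' i'] /=.
rewrite /E /= disj2 !inE !Veq ?sc_lt // negb_and !negbK /share /samehex /tout /tin0.
btauto.
Qed.

End Geo.

Lemma set0_edges (T : finType) (e : rel T) : set0 \notin edges e.
Proof.
apply/negP; rewrite inE => /existsP[x /existsP[y /and3P[_ _ /eqP h]]].
have : x \in [set x; y] by rewrite !inE eqxx.
by rewrite -h inE.
Qed.

Lemma maxE (T : finType) (e : rel T) (M : {set {set T}}) : is_matching e M ->
  is_maximal_matching e M =
  [forall A in edges e, (A \notin M) ==> [exists B in M, ~~ [disjoint A & B]]].
Proof.
move=> mM; rewrite /is_maximal_matching mM /=.
case/andP: mM => sM tM.
apply/forallP/forallP => [H A|H M'].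
  apply/implyP => eA; apply/implyP => nAM; apply: contraT => nex.
  have := H (A |: M).
  have sub' : A |: M \subset edges e by rewrite subUset sub1set eA sM.
  have dis : {in M, forall B : {set T}, [disjoint A & B]}.
    by move=> B BM; apply: contraT => nd; case/negP: nex; apply/existsP; exists B; rewrite BM.
  have n0 : set0 \notin M by apply/negP => /(subsetP sM); rewrite (negbTE (set0_edges e)).
  have [tr _] := trivIsetU1 dis tM n0.
  rewrite /is_matching sub' tr /=.
  move=> /negbTE <-; rewrite properE subsetUr /=; apply/subsetPn.
  by exists A; rewrite ?inE ?eqxx.
apply/implyP => /andP[sM' tM']; apply/negP => /properP[sMM' [A AM' nAM]].
have eA : A \in edges e by apply: (subsetP sM').
have := H A; rewrite eA nAM /= => /existsP[B /andP[BM nd]].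
have BM' : B \in M' by apply: (subsetP sMM').
move/trivIsetP: tM' => /(_ A B AM' BM').
have -> : A != B by apply/eqP => AB; move: nAM; rewrite AB BM.
by move=> /(_ isT); apply/negP.
Qed.


Section Acc.
Variable dd : nat.

Definition LocG c r (s : seq nat) : Prop :=
  [/\ r -> (0 < size s) && enc (nth 0 s 0),
      ~~ [&& c, 0 < size s & enc (nth 0 s 0)],
      forall k, k < size s -> intra (nth 0 s k),
      forall k, k.+1 < size s -> ~~ (exc dd (nth 0 s k) && enc (nth 0 s k.+1)) &
      forall k i, k < size s -> i < 6 -> ~~ mem6 (nth 0 s k) i ->
        [|| nbr (nth 0 s k) i, tin0 i && (if k is k'.+1 then exc dd (nth 0 s k') else c) |
            [&& tout dd i, k.+1 < size s & enc (nth 0 s k.+1)]]].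

Lemma goodP c w : good dd c w = intra w &&
  [forall i : 'I_6, mem6 w i || tout dd i || covin c w i].
Proof.
rewrite /good; congr (_ && _); apply/allP/forallP => [H i|H i].
  by rewrite -orbA; apply: H; rewrite mem_iota /=.
rewrite mem_iota /= => hi; have := H (Ordinal hi); by rewrite -orbA.
Qed.

Lemma reqP c w : reflect (exists2 i, i < 6 & [&& ~~ mem6 w i, tout dd i & ~~ covin c w i]) (req dd c w).
Proof.
apply: (iffP hasP) => [[i]|[i hi H]]; first by rewrite mem_iota /= => hi H; exists i.
by exists i; rewrite ?mem_iota.
Qed.

Lemma accP c r s : acc dd c r s <-> LocG c r s.
Proof.
elim: s c r => [|w s IH] c r.
  rewrite /LocG /=; split.
    move=> nr; split; [by move=> hr; move: nr; rewrite hr | by rewrite andbF | by [] | by [] | by []].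
  by case=> h1 _ _ _ _; apply/negP => hr; have := h1 hr.
rewrite /=; split.
  move=> /andP[/and3P[gd rw ce] /IH [h1 h2 h3 h4 h5]].
  move: gd; rewrite goodP => /andP[iw /forallP gw].
  split.
  - by move=> hr; move: rw; rewrite hr.
  - by [].
  - by case=> [|k] //= hk; apply: h3.
  - case=> [|k] /= hk; last by apply: h4.
    by rewrite ltnS in hk; move: h2; rewrite hk.
  case=> [|k] i /= hk hi; last first.
    move=> nm; have := h5 k i hk hi nm.
    by case: k hk nm.
  move=> nm; have := gw (Ordinal hi); rewrite /= (negbTE nm) /=.
  case ti: (tout dd i) => /=; last by rewrite /covin orbF.
  case cv: (covin c w i); first by move: cv; rewrite /covin => /orP[->|->]; rewrite ?orbT.
  move=> _; have hr : req dd c w by apply/reqP; exists i => //; rewrite nm ti cv.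
  by case/andP: (h1 hr) => h h'; rewrite ltnS h h' !orbT.
case=> [h1 h2 h3 h4 h5]; apply/andP; split; last (apply/IH; split).
- rewrite /check goodP (h3 0) //=; apply/and3P; split => //.
  + apply/forallP => i; case m: (mem6 w i) => //=.
    have /or3P[h|h|/and3P[h _ _]] := h5 0 i isT (ltn_ord i) (negbT m); by rewrite /covin ?h ?orbT.
  + by apply/implyP => /h1.
- move=> /reqP[i hi /and3P[nm ti ncv]].
  have := h5 0 i isT hi nm; rewrite /= ti /=.
  by move: ncv; rewrite /covin negb_or => /andP[/negbTE -> /negbTE ->].
- case: (ltnP 0 (size s)) => hs; last by rewrite /= andbF.
  by move: (h4 0); rewrite /= ltnS hs => /(_ isT).
- by move=> k hk; apply: (h3 k.+1).
- by move=> k hk; apply: (h4 k.+1).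
- move=> k i hk hi nm; have := h5 k.+1 i hk hi nm.
  by case: k hk nm.
Qed.
End Acc.


Definition code (b : nat -> bool) := \sum_(0 <= i < 6) b i * 2 ^ i.
Lemma codeP b : code b < 64 /\ forall j, j < 6 -> mem6 (code b) j = b j.
Proof. rewrite /code unlock /=; split; last case=> [|[|[|[|[|[|//]]]]]] _;
  by case: (b 0); case: (b 1); case: (b 2); case: (b 3); case: (b 4); case: (b 5).
Qed.
Lemma maskinj (w w' : 'I_64) : (forall i, i < 6 -> mem6 w i = mem6 w' i) -> w = w'.
Proof.
move=> H; apply: val_inj => /=.
have : all (fun a => all (fun b => all (fun i => mem6 a i == mem6 b i) (iota 0 6) ==> (a == b)) (iota 0 64)) (iota 0 64) by vm_compute.
move=> /allP/(_ w); rewrite mem_iota ltn_ord => /(_ isT) /allP /(_ w'); rewrite mem_iota ltn_ord => /(_ isT) /implyP.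
move=> h; apply/eqP/h; apply/allP => i; rewrite mem_iota => /andP[_ hi]; by rewrite H.
Qed.

Section Main.
Variable d : nat.
Hypothesis hd : [|| d == 1, d == 2 | d == 3].
Variable n : nat.

Definition F (f : {ffun 'I_n -> 'I_64}) : {set {set 'I_(5 * n).+1}} :=
  [set E d p | p in [set p : 'I_n * 'I_6 | mem6 (f p.1) p.2]].

Lemma memF f p : (E d p \in F f) = mem6 (f p.1) p.2.
Proof. by rewrite mem_imset ?inE //; exact: (@E_inj d hd n). Qed.

Lemma F_sub f : F f \subset edges (chain_adj d n).
Proof. by rewrite (edgesE hd); apply/subsetP => A /imsetP[p _ ->]; apply: imset_f. Qed.

Lemma F_inj : injective F.
Proof.
move=> f f' H; apply/ffunP => k; apply: maskinj => i hi.
by rewrite -(memF f (k, Ordinal hi)) H memF.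
Qed.

Lemma F_surj (M : {set {set 'I_(5 * n).+1}}) : M \subset edges (chain_adj d n) -> exists f, M = F f.
Proof.
move=> sM.
pose b (k : 'I_n) := fun i : nat => E d (k, inord i) \in M.
exists [ffun k => Ordinal (proj1 (codeP (b k)))].
apply/setP => A; apply/idP/imsetP.
  move=> AM; have := subsetP sM A AM; rewrite (edgesE hd) => /imsetP[p _ eA].
  exists p => //; rewrite inE ffunE /= (proj2 (codeP _)) ?ltn_ord // /b inord_val.
  by rewrite -surjective_pairing -eA.
move=> [p]; rewrite inE ffunE /= (proj2 (codeP _)) ?ltn_ord // /b inord_val => h ->.
by move: h; rewrite -surjective_pairing.
Qed.

Lemma trivF f : trivIset (F f) <->
  (forall p q : 'I_n * 'I_6, mem6 (f p.1) p.2 -> mem6 (f q.1) q.2 -> p != q -> [disjoint E d p & E d q]).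
Proof.
split => [/trivIsetP H p q sp sq npq|H].
  by apply: H; rewrite ?memF // (inj_eq (@E_inj d hd n)).
apply/trivIsetP => A B /imsetP[p sp ->] /imsetP[q sq ->] ne.
apply: H; [by rewrite inE in sp | by rewrite inE in sq |].
by apply/eqP => epq; move: ne; rewrite epq eqxx.
Qed.

Lemma maxF f : trivIset (F f) -> is_maximal_matching (chain_adj d n) (F f) <->
  (forall q : 'I_n * 'I_6, ~~ mem6 (f q.1) q.2 -> exists p : 'I_n * 'I_6, mem6 (f p.1) p.2 && ~~ [disjoint E d q & E d p]).
Proof.
move=> tr; rewrite maxE; last by rewrite /is_matching F_sub.
split => [/forallP H q nq|H].
  have := H (E d q); rewrite (edgesE hd) imset_f // memF nq /= => /existsP[B /andP[BF nd]].
  case/imsetP: BF nd => p sp -> nd; exists p; rewrite nd andbT; by rewrite inE in sp.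
apply/forallP => A; apply/implyP; rewrite (edgesE hd) => /imsetP[q _ ->].
apply/implyP; rewrite memF => nq; have [p /andP[sp nd]] := H q nq.
by apply/existsP; exists (E d p); rewrite memF sp nd.
Qed.

Lemma size_lst (f : {ffun 'I_n -> 'I_64}) : size (lst f) = n.
Proof. by rewrite /lst size_map size_enum_ord. Qed.

Lemma nth_lst (f : {ffun 'I_n -> 'I_64}) (k : 'I_n) : nth 0 (lst f) k = f k.
Proof. by rewrite /lst (nth_map k) ?size_enum_ord // nth_ord_enum. Qed.

End Main.


Section Main3.
Variable d : nat.
Hypothesis hd : [|| d == 1, d == 2 | d == 3].
Variable n : nat.
Variable f : {ffun 'I_n -> 'I_64}.

Let S (p : 'I_n * 'I_6) := mem6 (f p.1) p.2.

Lemma LocEquiv :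
  ((forall p q : 'I_n * 'I_6, S p -> S q -> p != q -> [disjoint E d p & E d q]) /\
   (forall q : 'I_n * 'I_6, ~~ S q -> exists p : 'I_n * 'I_6, S p && ~~ [disjoint E d q & E d p]))
  <-> LocG d false false (lst f).
Proof.
rewrite /S; split.
  case=> mt mx; split; rewrite ?size_lst //.
  - move=> k hk; rewrite (nth_lst f (Ordinal hk)).
    apply/allP => i; rewrite mem_iota => /andP[_ hi]; apply/allP => j; rewrite mem_iota => /andP[_ hj].
    apply/implyP => mi; apply/implyP => mj; apply/implyP => nij.
    have := mt (Ordinal hk, Ordinal hi) (Ordinal hk, Ordinal hj) mi mj.
    rewrite xpair_eqE eqxx /= => /(_ nij) /negPn.
    by rewrite (touchE hd) /= eqxx /= negb_or => /andP[].
  - move=> k hk; have hk' : k < n by apply: ltnW.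
    rewrite (nth_lst f (Ordinal hk)) (nth_lst f (Ordinal hk')).
    apply/negP => /andP[/hasP[i]]; rewrite mem_iota => /andP[_ hi] /andP[mi ti].
    move=> /hasP[j]; rewrite mem_iota => /andP[_ hj] /andP[mj tj].
    have := mt (Ordinal hk', Ordinal hi) (Ordinal hk, Ordinal hj) mi mj.
    rewrite xpair_eqE /= -(inj_eq val_inj) /= eqn_leq ltnn andbF /= => /(_ isT) /negPn.
    by rewrite (touchE hd) /= eqxx ti tj /= orbT.
  - move=> k i hk hi; rewrite (nth_lst f (Ordinal hk)) => nm.
    have [[k2 i2] /andP[sp nd]] := mx (Ordinal hk, Ordinal hi) nm; rewrite /= in sp.
    move: nd; rewrite (touchE hd) /= => /or3P[/andP[/eqP e sh]|/and3P[/eqP e ti tj]|/and3P[/eqP e t0 to]].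
    + have ek : Ordinal hk = k2 by apply: val_inj.
      apply/orP; left; apply/hasP; exists (val i2); first by rewrite mem_iota /=.
      rewrite ek sp sh andbT /=; apply/negP => /eqP ei; move: nm; by rewrite ek -ei sp.
    + have hk1 : k.+1 < n by rewrite -e.
      rewrite ti hk1 (nth_lst f (Ordinal hk1)) /=; apply/orP; right; apply/orP; right.
      apply/hasP; exists (val i2); first by rewrite mem_iota /=.
      have -> : Ordinal hk1 = k2 by apply: val_inj.
      by rewrite sp tj.
    + subst k; rewrite t0 /=; apply/orP; right; apply/orP; left.
      rewrite (nth_lst f k2); apply/hasP; exists (val i2); first by rewrite mem_iota /=.
      by rewrite sp to.
case=> _ _ h3 h4 h5; rewrite size_lst in h3 h4 h5; split.
  move=> [k i] [k' i'] /= mp mq npq; apply/negPn/negP.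
  rewrite (touchE hd) /= => /or3P[/andP[/eqP e sh]|/and3P[/eqP e ti tj]|/and3P[/eqP e t0 to]].
  - have ek : k = k' by apply: val_inj.
    subst k'; have := h3 k (ltn_ord k); rewrite (nth_lst f k) /intra => /allP H1.
    have /allP H2 := H1 i ltac:(by rewrite mem_iota ltn_ord).
    have := H2 i' ltac:(by rewrite mem_iota ltn_ord).
    rewrite mp mq /= sh /= implybF negbK => /eqP ei.
    by move: npq; rewrite xpair_eqE eqxx /= (_ : i = i') ?eqxx //; apply: val_inj.
  - have hk1 : k.+1 < n by rewrite -e.
    have := h4 k hk1; rewrite (nth_lst f k) (nth_lst f (Ordinal hk1)).
    have -> : Ordinal hk1 = k' by apply: val_inj.
    move=> /negP H; exfalso; apply: H; apply/andP; split; apply/hasP.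
      by exists (val i); rewrite ?mem_iota ?ltn_ord // mp ti.
    by exists (val i'); rewrite ?mem_iota ?ltn_ord // mq tj.
  - have hk1 : k'.+1 < n by rewrite -e.
    have := h4 k' hk1; rewrite (nth_lst f k') (nth_lst f (Ordinal hk1)).
    have -> : Ordinal hk1 = k by apply: val_inj.
    move=> /negP H; exfalso; apply: H; apply/andP; split; apply/hasP.
      by exists (val i'); rewrite ?mem_iota ?ltn_ord // mq to.
    by exists (val i); rewrite ?mem_iota ?ltn_ord // mp t0.
move=> [k i] /= nm.
have := h5 k i (ltn_ord k) (ltn_ord i); rewrite (nth_lst f k) => /(_ nm).
case/or3P => [/hasP[j]|/andP[t0]|/and3P[ti hk1]].
- rewrite mem_iota /= => hj /and3P[mj nji sh].
  exists (k, Ordinal hj); rewrite /= mj (touchE hd) /= eqxx sh //.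
- case: k nm => [[|k2] hk] //= nm /hasP[j]; rewrite mem_iota /= => hj /andP[mj to].
  have hk2 : k2 < n by apply: ltnW.
  exists (Ordinal hk2, Ordinal hj); rewrite /= -(nth_lst f (Ordinal hk2)) /= mj (touchE hd) /=.
  by rewrite eqxx t0 to !orbT.
- rewrite (nth_lst f (Ordinal hk1)) => /hasP[j]; rewrite mem_iota /= => hj /andP[mj tj].
  exists (Ordinal hk1, Ordinal hj); rewrite /= mj (touchE hd) /= eqxx ti tj.
  by rewrite !orbT.
Qed.
End Main3.


Section Main4.
Variable d : nat.
Hypothesis hd : [|| d == 1, d == 2 | d == 3].
Variable n : nat.

Lemma maxacc (f : {ffun 'I_n -> 'I_64}) :
  is_maximal_matching (chain_adj d n) (F d f) = acc d false false (lst f).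
Proof.
apply/idP/idP => [mm|ac].
  have tr : trivIset (F d f) by case/andP: mm => /andP[].
  apply/accP/(LocEquiv hd); split; first by apply/(trivF hd).
  by apply/(maxF hd tr).
have [mt mx] := (LocEquiv hd f).2 ((accP _ _ _ _).1 ac).
have tr : trivIset (F d f) by apply/(trivF hd).
by apply/(maxF hd tr).
Qed.

Lemma PsiE : Psi (chain_adj d n) = cnt d n false false.
Proof.
rewrite /Psi.
have -> : [set M | is_maximal_matching (chain_adj d n) M] =
          (@F d n) @: [set f : {ffun 'I_n -> 'I_64} | acc d false false (lst f)].
  apply/setP => M; rewrite inE; apply/idP/imsetP.
    move=> mm; have := mm; case/andP => /andP[sM _] _.
    have [f eM] := F_surj hd sM; exists f => //; rewrite inE -maxacc -eM //.
  by move=> [f hf ->]; rewrite maxacc; rewrite inE in hf.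
rewrite card_imset; last exact: (@F_inj d hd n).
rewrite -sum1_card big_mkcond /cnt /=; apply: eq_bigr => f _; rewrite inE.
by case: acc.
Qed.
End Main4.

Lemma cntv1 : [/\ cnt 3 1 false false = 5, cnt 2 1 false false = 5 & cnt 1 1 false false = 5].
Proof.
case: coefs3 => e0 [e1 [e2 [e3 _]]]; case: coefs2 => f0 [f1 [f2 [f3 _]]];
case: coefs1 => g0 [g1 [g2 [g3 _]]].
by rewrite !cnt_S2 !cnt0 e0 e1 e2 e3 f0 f1 f2 f3 g0 g1 g2 g3.
Qed.

Lemma cntv2 : [/\ cnt 3 2 false false = 25, cnt 2 2 false false = 25 & cnt 1 2 false false = 25].
Proof.
split.
- case: coefs3 => e0 [e1 [e2 [e3 [e4 [e5 [e6 [e7 [e8 [e9 [e10 e11]]]]]]]]]].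
  rewrite !cnt_S2 !cnt0 !e0 !e1 !e2 !e3 !e4 !e5 !e6 !e7 !e8 !e9 !e10 !e11; lia.
- case: coefs2 => e0 [e1 [e2 [e3 [e4 [e5 [e6 [e7 [e8 [e9 [e10 e11]]]]]]]]]].
  rewrite !cnt_S2 !cnt0 !e0 !e1 !e2 !e3 !e4 !e5 !e6 !e7 !e8 !e9 !e10 !e11; lia.
- case: coefs1 => e0 [e1 [e2 [e3 [e4 [e5 [e6 [e7 [e8 [e9 [e10 e11]]]]]]]]]].
  rewrite !cnt_S2 !cnt0 !e0 !e1 !e2 !e3 !e4 !e5 !e6 !e7 !e8 !e9 !e10 !e11; lia.
Qed.


Lemma pseqE n : pseq n = cnt 3 n false false.
Proof. case: n => [|n]; first by rewrite cnt0. exact: (@PsiE 3 isT n.+1). Qed.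
Lemma mseqE n : mseq n = cnt 2 n false false.
Proof. case: n => [|n]; first by rewrite cnt0. exact: (@PsiE 2 isT n.+1). Qed.
Lemma oseqE n : oseq n = cnt 1 n false false.
Proof. case: n => [|n]; first by rewrite cnt0. exact: (@PsiE 1 isT n.+1). Qed.

Lemma prec k : (pseq k.+3 + 4 * pseq k.+1 = 5 * pseq k.+2 + 4 * pseq k)%N.
Proof. rewrite !pseqE; exact: rec3. Qed.
Lemma mrec k : (mseq k.+3 + 3 * mseq k.+1 = 6 * mseq k.+2 + 2 * mseq k)%N.
Proof. rewrite !mseqE; exact: rec2. Qed.
Lemma orec k : (oseq k.+3 = 4 * oseq k.+2 + 4 * oseq k.+1 + oseq k)%N.
Proof. rewrite !oseqE; exact: rec1. Qed.
Import GRing.Theory.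
Local Open Scope ring_scope.

Theorem corollary3p5 :
  [/\ pseq 0 = 1%N, pseq 1 = 5%N, pseq 2 = 25%N &
      forall n : nat, (3 <= n)%N ->
        (pseq n)%:Z = 5 * (pseq (n - 1)%N)%:Z - 4 * (pseq (n - 2)%N)%:Z + 4 * (pseq (n - 3)%N)%:Z]
  /\
  [/\ mseq 0 = 1%N, mseq 1 = 5%N, mseq 2 = 25%N &
      forall n : nat, (3 <= n)%N ->
        (mseq n)%:Z = 6 * (mseq (n - 1)%N)%:Z - 3 * (mseq (n - 2)%N)%:Z + 2 * (mseq (n - 3)%N)%:Z]
  /\
  [/\ oseq 0 = 1%N, oseq 1 = 5%N, oseq 2 = 25%N &
      forall n : nat, (3 <= n)%N ->
        (oseq n)%:Z = 4 * (oseq (n - 1)%N)%:Z + 4 * (oseq (n - 2)%N)%:Z + (oseq (n - 3)%N)%:Z].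
Proof.
case: cntv1 => p1 m1 o1; case: cntv2 => p2 m2 o2.
split; [|split]; split.
- by [].
- by rewrite pseqE p1.
- by rewrite pseqE p2.
- case=> [|[|[|k]]] hk; [by [] | by [] | by [] |].
  have := prec k; rewrite !subSS !subn0.
  move: (pseq k.+3) (pseq k.+2) (pseq k.+1) (pseq k) => a b c e H; lia.
- by [].
- by rewrite mseqE m1.
- by rewrite mseqE m2.
- case=> [|[|[|k]]] hk; [by [] | by [] | by [] |].
  have := mrec k; rewrite !subSS !subn0.
  move: (mseq k.+3) (mseq k.+2) (mseq k.+1) (mseq k) => a b c e H; lia.
- by [].
- by rewrite oseqE o1.
- by rewrite oseqE o2.
- case=> [|[|[|k]]] hk; [by [] | by [] | by [] |].
  have := orec k; rewrite !subSS !subn0.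
  move: (oseq k.+3) (oseq k.+2) (oseq k.+1) (oseq k) => a b c e H; lia.
Qed.
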